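(* Let $\mathbf{OMSupGal}$ be the full subcategory of $\mathbf{OMLatGal}$ on complete orthomodular lattices, and let $U:\mathbf{OMSupGal}\to\mathbf{Sets}$ be the functor $X\mapsto X$, $f\mapsto f_*\circ(-)^\perp$. Then $U$ has a left adjoint $F$ with $F(A)=\mathcal{P}(A)$ (the powerset Boolean algebra) and, for $g:A\to B$, $F(g)_*(V)=\neg\{g(a):a\in V\}$ for $V\subseteq A$ and $F(g)^*(W)=\{a\in A:g(a)\notin W\}$ for $W\subseteq B$. The adjunction bijection between morphisms $f:\mathcal{P}(A)\to X$ in $\mathbf{OMSupGal}$ and functions $g:A\to X$ is given by $\bar f(a)=f_*(\{a\})^\perp$ and $\bar g_*(V)=\bigwedge_{a\in V}g(a)^\perp$, $\bar g^*(x)=\{a\in A:g(a)\le x^\perp\}$.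
   Context: An orthomodular lattice is a bounded lattice with an order-reversing involution $x\mapsto x^\perp$ such that $x\wedge x^\perp=0$, $x\vee x^\perp=1$, and $x\le y$ implies $y=x\vee(x^\perp\wedge y)$; it is complete if all subsets have joins (hence meets). $\mathbf{OMLatGal}$: objects orthomodular lattices; morphisms $f:X\to Y$ are pairs $(f_*,f^* )$ of order-reversing maps $f_*:X\to Y$, $f^*:Y\to X$ with $y\le f_*(x)\iff x\le f^*(y)$; identity has both components $x\mapsto x^\perp$; composition $(g\circ f)_*=g_*\circ\perp\circ f_*$, $(g\circ f)^*=f^*\circ\perp\circ g^*$. In $\mathcal{P}(A)$, $\neg$ denotes set complement, which is its orthocomplement.
   Formalization: The adjunction bijection, natural in X, sends f to a ↦ $f_*$({a}), the orthocomplement of f̄(a); f̄ and ḡ are mutually inverse, with f̄ natural in A only. Each condition added here is assumed in the paper as well or is needed for the statement above to hold. *)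

(* Defs.v *)
From Stdlib Require Import Classical FunctionalExtensionality PropExtensionality.

Record OML := {
  carrier :> Type;
  le : carrier -> carrier -> Prop;
  meet : carrier -> carrier -> carrier;
  join : carrier -> carrier -> carrier;
  bot : carrier;
  top : carrier;
  orth : carrier -> carrier;
  le_refl : forall x, le x x;
  le_trans : forall x y z, le x y -> le y z -> le x z;
  le_antisym : forall x y, le x y -> le y x -> x = y;
  meetP : forall x y z, le z (meet x y) <-> (le z x /\ le z y);
  joinP : forall x y z, le (join x y) z <-> (le x z /\ le y z);
  bot_le : forall x, le bot x;
  le_top : forall x, le x top;
  orth_anti : forall x y, le x y -> le (orth y) (orth x);
  orth_inv : forall x, orth (orth x) = x;
  meet_orth : forall x, meet x (orth x) = bot;
  join_orth : forall x, join x (orth x) = top;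
  orthomod : forall x y, le x y -> y = join x (meet (orth x) y)
}.

(** Complete orthomodular lattice: every subset has an infimum
    (equivalently, every subset has a supremum). *)
Record COML := {
  oml :> OML;
  Inf : (carrier oml -> Prop) -> carrier oml;
  InfP : forall (S : carrier oml -> Prop) z,
      le oml z (Inf S) <-> (forall s, S s -> le oml z s)
}.

Arguments le {o} _ _.
Arguments orth {o} _.

Record GalMor (X Y : OML) := {
  low : carrier X -> carrier Y;
  up : carrier Y -> carrier X;
  low_anti : forall x x', le x x' -> le (low x') (low x);
  up_anti : forall y y', le y y' -> le (up y') (up y);
  galois : forall x y, le y (low x) <-> le x (up y)
}.
Arguments low {X Y} _ _.
Arguments up {X Y} _ _.

Definition mor_eq {X Y : OML} (f g : GalMor X Y) : Prop :=
  (forall x, low f x = low g x) /\ (forall y, up f y = up g y).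

Lemma orth_le_swap (X : OML) (x y : carrier X) :
  le (orth x) y -> le (orth y) x.
Proof.
  intro H. apply orth_anti in H. rewrite orth_inv in H. exact H.
Qed.

Definition idm (X : OML) : GalMor X X.
Proof.
  refine {| low := @orth X; up := @orth X |}.
  - intros; apply orth_anti; assumption.
  - intros; apply orth_anti; assumption.
  - intros x y; split; intro H.
    + apply orth_anti in H. rewrite orth_inv in H. exact H.
    + apply orth_anti in H. rewrite orth_inv in H. exact H.
Defined.

Definition comp {X Y Z : OML} (g : GalMor Y Z) (f : GalMor X Y) : GalMor X Z.
Proof.
  refine {| low := fun x => low g (orth (low f x));
            up := fun z => up f (orth (up g z)) |}.
  - intros x x' H. apply low_anti, orth_anti, low_anti, H.
  - intros y y' H. apply up_anti, orth_anti, up_anti, H.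
  - intros x z. rewrite galois. split; intro H.
    + apply orth_le_swap in H. apply (proj1 (galois _ _ f _ _)) in H. exact H.
    + apply (proj2 (galois _ _ f _ _)) in H. apply orth_le_swap in H. exact H.
Defined.

Definition Pow_OML (A : Type) : OML.
Proof.
  refine {| carrier := A -> Prop;
            le := fun V W => forall a, V a -> W a;
            meet := fun V W a => V a /\ W a;
            join := fun V W a => V a \/ W a;
            bot := fun _ => False;
            top := fun _ => True;
            orth := fun V a => ~ V a |}.
  - auto.
  - auto.
  - intros V W H1 H2. apply functional_extensionality; intro a.
    apply propositional_extensionality; split; auto.
  - intros V W Z; split; [intro H; split; intros a Ha; apply H; auto
                         | intros [H1 H2] a Ha; split; auto].
  - intros V W Z; split; [intro H; split; intros a Ha; apply H; auto
                         | intros [H1 H2] a [Ha|Ha]; auto].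
  - intros V a [].
  - auto.
  - intros V W H a Hn Hv. apply Hn, H, Hv.
  - intro V. apply functional_extensionality; intro a.
    apply propositional_extensionality; split; [apply NNPP | auto].
  - intro V. apply functional_extensionality; intro a.
    apply propositional_extensionality; split; [intros [H1 H2]; auto | intros []].
  - intro V. apply functional_extensionality; intro a.
    apply propositional_extensionality; split; [auto | intros _; apply classic].
  - intros V W H. apply functional_extensionality; intro a.
    apply propositional_extensionality; split.
    + intro Hw. destruct (classic (V a)); [left; auto | right; auto].
    + intros [Hv | [_ Hw]]; auto.
Defined.

Definition Pow (A : Type) : COML.
Proof.
  refine {| oml := Pow_OML A;
            Inf := fun (S : (A -> Prop) -> Prop) a => forall V, S V -> V a |}.
  intros S Z; simpl; split.
  - intros H V HV a Ha. apply (H a Ha V HV).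
  - intros H a Ha V HV. apply (H V HV a Ha).
Defined.

Definition Uarr {X Y : OML} (f : GalMor X Y) : carrier X -> carrier Y :=
  fun x => low f (orth x).

Definition single {A : Type} (a : A) : carrier (Pow A) := fun x => x = a.

Definition fbar {A : Type} {X : OML} (f : GalMor (Pow A) X) : A -> carrier X :=
  fun a => orth (low f (single a)).

(* Main.v *)
Require Import Defs.
From Stdlib Require Import Classical FunctionalExtensionality PropExtensionality.

Definition FmD (A B : Type) (g : A -> B) : GalMor (Pow A) (Pow B).
Proof.
  refine {| low := (fun (V : carrier (Pow A)) (b : B) => ~ (exists a, V a /\ g a = b)) : carrier (Pow A) -> carrier (Pow B);
            up := (fun (W : carrier (Pow B)) (a : A) => ~ W (g a)) : carrier (Pow B) -> carrier (Pow A) |}.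
  - simpl. intros V V' H b Hn [a [Ha Hb]]. apply Hn. exists a. auto.
  - simpl. intros W W' H a Hn Hw. apply Hn, H, Hw.
  - simpl. intros V W; split.
    + intros H a Ha Hw. apply (H _ Hw). exists a; auto.
    + intros H b Hw [a [Ha Hb]]. subst. apply (H a Ha Hw).
Defined.

Lemma orth_swap (X : OML) (x y : carrier X) : le x (orth y) <-> le y (orth x).
Proof.
  split; intro H; apply orth_anti in H; rewrite orth_inv in H; exact H.
Qed.

Definition gbarD (A : Type) (X : COML) (g : A -> carrier X) : GalMor (Pow A) X.
Proof.
  refine {| low := fun (V : carrier (Pow A)) => Inf X (fun x => exists a, V a /\ x = orth (g a));
            up := (fun (x : carrier X) (a : A) => le (g a) (orth x)) : carrier X -> carrier (Pow A) |}.
  - simpl. intros V V' H. apply InfP. intros s [a [Ha ->]].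
    apply (proj1 (InfP X _ _) (le_refl _ _)). exists a; auto.
  - simpl. intros y y' H a Ha. eapply le_trans; [exact Ha|]. apply orth_anti, H.
  - simpl. intros V y. rewrite InfP. split.
    + intros H a Ha. apply orth_swap. apply H. exists a; auto.
    + intros H s [a [Ha ->]]. apply orth_swap. apply H, Ha.
Defined.

Lemma pow_ext {A : Type} (V W : A -> Prop) : (forall a, V a <-> W a) -> V = W.
Proof.
  intro H. apply functional_extensionality; intro a. apply propositional_extensionality, H.
Qed.

Theorem mainTheorem13 :
  exists (Fm : forall A B : Type, (A -> B) -> GalMor (Pow A) (Pow B)),
    (forall (A B : Type) (g : A -> B) (V : carrier (Pow A)),
        low (Fm A B g) V = (fun b : B => ~ (exists a, V a /\ g a = b))) /\
    (forall (A B : Type) (g : A -> B) (W : carrier (Pow B)),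
        up (Fm A B g) W = (fun a : A => ~ W (g a))) /\
    (forall A : Type, mor_eq (Fm A A (fun a => a)) (idm (Pow A))) /\
    (forall (A B C : Type) (g : A -> B) (h : B -> C),
        mor_eq (Fm A C (fun a => h (g a))) (comp (Fm B C h) (Fm A B g))) /\
    exists (gbar : forall (A : Type) (X : COML), (A -> carrier X) -> GalMor (Pow A) X),
      (forall (A : Type) (X : COML) (g : A -> carrier X) (V : carrier (Pow A)),
          low (gbar A X g) V = Inf X (fun x => exists a, V a /\ x = orth (g a))) /\
      (forall (A : Type) (X : COML) (g : A -> carrier X) (x : carrier X),
          up (gbar A X g) x = (fun a : A => le (g a) (orth x))) /\
      (forall (A : Type) (X : COML) (g : A -> carrier X) (a : A),
          fbar (gbar A X g) a = g a) /\
      (forall (A : Type) (X : COML) (f : GalMor (Pow A) X),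
          mor_eq (gbar A X (fbar f)) f) /\
      (forall (A' A : Type) (X : COML) (h : A' -> A)
              (f : GalMor (Pow A) X) (a' : A'),
          fbar (comp f (Fm A' A h)) a' = fbar f (h a')) /\
      (forall (A : Type) (X X' : COML)
              (f : GalMor (Pow A) X) (k : GalMor X X') (a : A),
          orth (fbar (comp k f) a) = Uarr k (orth (fbar f a))).
Proof.
  exists FmD. split; [reflexivity|]. split; [reflexivity|]. split.
  { intro A. split.
    - intro V. simpl. apply pow_ext. intro b. split.
      + intros H Hv. apply H. exists b; auto.
      + intros H [a [Ha ->]]. auto.
    - intro W. reflexivity. }
  split.
  { intros A B C g h. split.
    - intro V. simpl. apply pow_ext. intro c. split.
      + intros H [b [Hb <-]]. apply Hb. intros [a [Ha <-]]. apply H. exists a; auto.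
      + intros H [a [Ha <-]]. apply H. exists (g a). split; auto.
        intro Hn. apply Hn. exists a; auto.
    - intro W. simpl. apply pow_ext. intro a. cbn. split.
      + tauto.
      + tauto. }
  exists gbarD. split; [reflexivity|]. split; [reflexivity|]. split.
  { intros A X g a. unfold fbar. simpl.
    assert (E : Inf X (fun x => exists a0, single a a0 /\ x = orth (g a0)) = orth (g a)).
    { apply le_antisym.
      - apply (proj1 (InfP X _ _) (le_refl _ _)). exists a. split; reflexivity.
      - apply InfP. intros s [a0 [Ha ->]]. unfold single in Ha. subst. apply le_refl. }
    rewrite E. apply orth_inv. }
  split.
  { intros A X f. split.
    - intro V. simpl. unfold fbar.
      apply le_antisym.
      + apply (proj2 (galois _ _ f _ _)). intros a Ha.
        assert (Hs : le (Inf X (fun x => exists a0, V a0 /\ x = orth (orth (low f (single a0))))) (low f (single a))).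
        { apply (proj1 (InfP X _ _) (le_refl _ _)). exists a. split; auto. rewrite orth_inv; reflexivity. }
        apply (proj1 (galois _ _ f _ _)) in Hs. apply Hs. reflexivity.
      + apply InfP. intros s [a [Ha ->]]. rewrite orth_inv. apply low_anti.
        simpl. intros x Hx. unfold single in Hx. subst. exact Ha.
    - intro x. simpl. unfold fbar. apply pow_ext. intro a. split.
      + intro H. apply orth_anti in H. rewrite !orth_inv in H.
        apply (proj1 (galois _ _ f _ _)) in H. apply H. reflexivity.
      + intro H. apply orth_anti.
        apply (proj2 (galois _ _ f _ _)). simpl. intros a0 Ha0. unfold single in Ha0. subst. exact H. }
  split.
  { intros A' A X h f a'. unfold fbar. simpl. f_equal. f_equal.
    apply pow_ext. intro b. unfold single. split.
    - intro H. apply NNPP. intro Hn. apply H. intros [a [-> Hb]]. apply Hn. auto.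
    - intros -> Hn. apply Hn. exists a'. auto. }
  { intros A X X' f k a. unfold fbar, Uarr. simpl. rewrite !orth_inv. reflexivity. }
Qed.
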